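(* Let $H$ be a Hilbert space and let $T$ be a densely defined closed operator on $H$ which is quasinormal and EP. Then $w(T^{n}) = (w(T))^{n}$ for all $n \in \mathbb{N}$.
   Context: For a densely defined closed operator $A$ from $D(A)\subset H$ into a Hilbert space $K$, $A^{*}$ is its adjoint, $N(A)$ its null space, $R(A)$ its range, and $C(A)=D(A)\cap N(A)^{\perp}$. When $R(A)$ is closed, the Moore–Penrose inverse $A^{\dagger}$ is the operator defined on $R(A)\oplus^{\perp}R(A)^{\perp}$ by $A^{\dagger}y=(A|_{C(A)})^{-1}y$ for $y\in R(A)$ and $A^{\dagger}y=0$ for $y\in R(A)^{\perp}$; it is bounded. The generalized Cauchy dual of $A$ is $w(A)=A(A^{*}A)^{\dagger}$ (products of unbounded operators taken on their natural domains). A densely defined closed operator $T$ on $H$ is EP if $R(T)$ is closed and $R(T)=R(T^{*})$. It is quasinormal if $T(T^{*}T)=(T^{*}T)T$ (equality of operators including domains). *)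

(* Defs.v *)
From mathcomp Require Import all_boot all_algebra.
From mathcomp Require Import complex.
From mathcomp Require Import all_classical reals.

Set Implicit Arguments.
Unset Strict Implicit.
Unset Printing Implicit Defensive.

Import GRing.Theory Num.Theory.
Local Open Scope ring_scope.
Local Open Scope classical_set_scope.

Section Hilbert.
Variables (R : realType) (V : lmodType R[i]) (ip : V -> V -> R[i]).

Definition inner_product : Prop :=
  [/\ forall (a : R[i]) (x y z : V), ip (a *: x + y) z = a * ip x z + ip y z,
      forall x y : V, ip x y = (ip y x)^*,
      forall x : V, 0 <= ip x x
    & forall x : V, ip x x = 0 -> x = 0].

Definition dist2 (x y : V) : R[i] := ip (x - y) (x - y).

Definition converges (u : nat -> V) (x : V) : Prop :=
  forall e : R[i], 0 < e -> exists N : nat, forall n, (N <= n)%N -> dist2 (u n) x < e.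

Definition cauchy (u : nat -> V) : Prop :=
  forall e : R[i], 0 < e -> exists N : nat,
    forall n m, (N <= n)%N -> (N <= m)%N -> dist2 (u n) (u m) < e.

Definition hilbert_space : Prop :=
  inner_product /\ forall u, cauchy u -> exists x, converges u x.

Definition is_closed (S : set V) : Prop :=
  forall (u : nat -> V) (x : V), (forall n, S (u n)) -> converges u x -> S x.

Definition is_dense (S : set V) : Prop :=
  forall (x : V) (e : R[i]), 0 < e -> exists2 y, S y & dist2 x y < e.

Definition is_subspace (S : set V) : Prop :=
  S 0 /\ forall (a : R[i]) (x y : V), S x -> S y -> S (a *: x + y).

(* A (possibly unbounded) operator on V: its domain and its action
   (the values outside the domain are irrelevant). *)
Record op := Op { dom : set V ; app : V -> V }.

Definition op_eq (A B : op) : Prop :=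
  dom A = dom B /\ forall x, dom A x -> app A x = app B x.

Definition densely_defined_closed (A : op) : Prop :=
  [/\ is_subspace (dom A),
      forall (a : R[i]) (x y : V), dom A x -> dom A y ->
        app A (a *: x + y) = a *: app A x + app A y,
      is_dense (dom A)
    & forall (u : nat -> V) (x y : V), (forall n, dom A (u n)) ->
        converges u x -> converges (fun n => app A (u n)) y ->
        dom A x /\ app A x = y].

Definition comp (A B : op) : op :=
  Op [set x | dom B x /\ dom A (app B x)] (fun x => app A (app B x)).

Definition id_op : op := Op setT id.

Fixpoint op_pow (A : op) (n : nat) : op :=
  match n with 0 => id_op | n'.+1 => comp A (op_pow A n') end.

Definition null_space (A : op) : set V := [set x | dom A x /\ app A x = 0].
Definition range (A : op) : set V := [set y | exists2 x, dom A x & app A x = y].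
Definition orth (S : set V) : set V := [set y | forall x, S x -> ip x y = 0].

Definition coimage (A : op) : set V := dom A `&` orth (null_space A).

Definition adj_rel (A : op) (y z : V) : Prop :=
  forall x, dom A x -> ip (app A x) y = ip x z.
Definition adjoint (A : op) : op :=
  Op [set y | exists z, adj_rel A y z] (fun y => xget 0 (adj_rel A y)).

Definition range_part (A : op) (y : V) : V :=
  xget 0 [set r | range A r /\ orth (range A) (y - r)].

(* Moore–Penrose inverse, defined on R(A) ⊕^⊥ R(A)^⊥ by
   A^† (r + s) = (A|_{C(A)})^{-1} r  (r ∈ R(A), s ∈ R(A)^⊥);
   meaningful when R(A) is closed. *)
Definition mp_inverse (A : op) : op :=
  Op [set y | exists r s, [/\ range A r, orth (range A) s & y = r + s]]
     (fun y => xget 0 [set x | coimage A x /\ app A x = range_part A y]).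

Definition cauchy_dual (A : op) : op :=
  comp A (mp_inverse (comp (adjoint A) A)).

Definition EP (T : op) : Prop :=
  is_closed (range T) /\ range T = range (adjoint T).

Definition quasinormal (T : op) : Prop :=
  op_eq (comp T (comp (adjoint T) T)) (comp (comp (adjoint T) T) T).

End Hilbert.

(* Main.v *)
Require Import Defs.
From mathcomp Require Import all_boot all_algebra.
From mathcomp Require Import complex.
From mathcomp Require Import all_classical reals.
From mathcomp Require Import ring lra.

Set Implicit Arguments.
Unset Strict Implicit.
Unset Printing Implicit Defensive.
Import order.Order.TTheory GRing.Theory Num.Theory.
Local Open Scope ring_scope.
Local Open Scope classical_set_scope.
Local Open Scope complex_scope.
Local Open Scope ring_scope.

Section IP.
Variables (R : realType) (W : lmodType R[i]) (ip : W -> W -> R[i]).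
Hypothesis Hip : inner_product ip.

Lemma ipDl x y z : ip (x + y) z = ip x z + ip y z.
Proof. by case: Hip => H1 _ _ _; rewrite -[x]scale1r H1 mul1r scale1r. Qed.

Lemma ip0l z : ip 0 z = 0.
Proof. have h := ipDl 0 0 z; rewrite addr0 in h. by apply: (addrI (ip 0 z)); rewrite addr0 -h. Qed.

Lemma ipZl a x z : ip (a *: x) z = a * ip x z.
Proof. by case: Hip => H1 _ _ _; rewrite -[a *: x]addr0 H1 ip0l addr0. Qed.

Lemma ipNl x z : ip (- x) z = - ip x z.
Proof. by rewrite -scaleN1r ipZl mulN1r. Qed.

Lemma ipBl x y z : ip (x - y) z = ip x z - ip y z.
Proof. by rewrite ipDl ipNl. Qed.

Lemma ipC x y : ip x y = (ip y x)^*.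
Proof. by case: Hip. Qed.

Lemma ipDr x y z : ip z (x + y) = ip z x + ip z y.
Proof. by rewrite ipC [ip z x]ipC [ip z y]ipC ipDl rmorphD. Qed.

Lemma ipZr a x z : ip z (a *: x) = a^* * ip z x.
Proof. by rewrite ipC [ip z x]ipC ipZl rmorphM. Qed.

Lemma ip0r z : ip z 0 = 0.
Proof. by rewrite ipC ip0l conjC0. Qed.

Lemma ipNr x z : ip z (- x) = - ip z x.
Proof. by rewrite ipC [ip z x]ipC ipNl rmorphN. Qed.

Lemma ipBr x y z : ip z (x - y) = ip z x - ip z y.
Proof. by rewrite ipDr ipNr. Qed.

Lemma ip_ge0 x : 0 <= ip x x.
Proof. by case: Hip => _ _ ? _. Qed.

Lemma ip_eq0 x : ip x x = 0 -> x = 0.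
Proof. by case: Hip => _ _ _; apply. Qed.

Lemma ip_conj x : (ip x x)^* = ip x x.
Proof. by rewrite -ipC. Qed.

Lemma ip_gt0 x : x <> 0 -> 0 < ip x x.
Proof.
move=> nx; rewrite lt_def ip_ge0 andbT; apply/negP => /eqP /ip_eq0; exact: nx.
Qed.

Lemma ip_expand (b t : W) (l : R[i]) :
  ip (b - l *: t) (b - l *: t) =
  ip b b - l^* * ip b t - l * ip t b + l * l^* * ip t t.
Proof.
rewrite ipBl !ipBr ipZl !ipZr ipZl.
rewrite opprB. rewrite [in RHS]addrAC. ring.
Qed.

Lemma ip_proj (b t : W) : ip t t != 0 ->
  ip (b - (ip b t / ip t t) *: t) (b - (ip b t / ip t t) *: t) =
  ip b b - ip b t * (ip b t)^* / ip t t.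
Proof.
move=> nz; rewrite ip_expand.
have hq : (ip t t)^* = ip t t by rewrite ip_conj.
rewrite rmorphM /= fmorphV /= hq.
rewrite [ip t b]ipC. field. done.
Qed.

Lemma cauchy_schwarz (b t : W) : ip b t * (ip b t)^* <= ip t t * ip b b.
Proof.
have [/ip_eq0 -> | nz] := eqVneq (ip t t) 0.
  by rewrite ip0r mul0r ip0l mul0r.
have h := ip_ge0 (b - (ip b t / ip t t) *: t).
rewrite ip_proj // subr_ge0 in h.
have q0 : 0 < ip t t by rewrite lt_def nz ip_ge0.
by move: h; rewrite ler_pdivrMr // [ip b b * _]mulrC.
Qed.

End IP.

Section Proj.
Variables (R : realType) (W : lmodType R[i]) (ip : W -> W -> R[i]).
Hypothesis Hip : inner_product ip.
Hypothesis Hcomp : forall u, cauchy ip u -> exists x, converges ip u x.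

Definition eps (n : nat) : R[i] := ((n.+1%:R : R)^-1)%:C.

Lemma eps_gt0 n : 0 < eps n.
Proof. by rewrite /eps ltcR invr_gt0 ltr0Sn. Qed.

Lemma archi_C (e : R[i]) : 0 < e -> exists N, forall n, (N <= n)%N -> eps n < e.
Proof.
move=> e0; have er := gtr0_real e0.
rewrite -(RRe_real er) ltcR in e0 *.
exists (Num.Def.trunc (complex.Re e)^-1) => n hn.
rewrite /eps ltcR -[complex.Re e]invrK ltf_pV2 ?posrE ?invr_gt0 ?ltr0Sn //.
apply: (lt_le_trans (truncnS_gt _)); by rewrite ler_nat ltnS.
Qed.

Lemma ge0_Re (z : R[i]) : 0 <= z -> (complex.Re z)%:C = z /\ 0 <= complex.Re z.
Proof.
move=> z0; split; first exact: RRe_real (ger0_real z0).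
by move: z0; rewrite lecE => /andP[].
Qed.

Lemma near_min (S : set W) (x : W) : S 0 ->
  forall n, exists s, S s /\ forall t, S t -> dist2 ip x s <= dist2 ip x t + eps n.
Proof.
move=> S0 n.
pose f t := complex.Re (dist2 ip x t).
pose E := [set f t | t in S].
have hE : has_inf E.
  split; first by exists (f 0), 0.
  exists 0 => _ [t _ <-]; rewrite /f; exact: (ge0_Re (ip_ge0 Hip _)).2.
have e0 : (0:R) < (n.+1%:R)^-1 by rewrite invr_gt0 ltr0Sn.
have [_ [s Ss <-] hs] := inf_adherent e0 hE.
exists s; split=> // t St.
have hi : inf E <= f t by apply: ge_inf; [case: hE | exists t].
have := (ge0_Re (ip_ge0 Hip (x - s))).1; rewrite /dist2 => <-.
have := (ge0_Re (ip_ge0 Hip (x - t))).1; rewrite /dist2 => <-.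
rewrite /eps -rmorphD /= lecR; rewrite /f /dist2 in hs hi.
apply: ltW; apply: (lt_le_trans hs); by rewrite lerD2r.
Qed.


Lemma sub_sub (x u v : W) : (x - v) - (x - u) = u - v.
Proof. by rewrite opprB addrC addrA subrK. Qed.

Lemma parallelogram a b :
  ip (a + b) (a + b) + ip (a - b) (a - b) = 2 * ip a a + 2 * ip b b.
Proof.
rewrite !(ipDl Hip) !(ipDr Hip) ?(ipNl Hip) ?(ipNr Hip) ?(ipNl Hip); ring.
Qed.

Lemma conj_par (c d : R[i]) : (c + d) * (c + d)^* <= 2 * (c * c^*) + 2 * (d * d^*).
Proof.
rewrite -subr_ge0.
have -> : 2 * (c * c^*) + 2 * (d * d^*) - (c + d) * (c + d)^* = (c - d) * (c - d)^*.
  rewrite !rmorphD rmorphN /=; ring.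
exact: mul_conjC_ge0.
Qed.

Lemma two_gt0 : (0 : R[i]) < 2.
Proof. by rewrite ltr0n. Qed.

Lemma half_half : (2^-1 + 2^-1 : R[i]) = 1.
Proof. by field. Qed.

Lemma conj_half : (2^-1 : R[i])^* = 2^-1.
Proof. by rewrite fmorphV /= rmorph_nat. Qed.

Theorem proj_exists (S : set W) : is_subspace S -> is_closed ip S ->
  forall x, exists p, S p /\ orth ip S (x - p).
Proof.
move=> [S0 Slin] Scl x.
have /choice [s hs] := near_min x S0.
have Ss n : S (s n) := (hs n).1.
have hmin n t : S t -> dist2 ip x (s n) <= dist2 ip x t + eps n := (hs n).2 t.
have SZ a u : S u -> S (a *: u) by move=> Su; rewrite -[_ *: u]addr0; apply: Slin.
have Smid u v : S u -> S v -> S (2^-1 *: u + 2^-1 *: v).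
  by move=> Su Sv; apply: Slin => //; apply: SZ.
have hc n m : dist2 ip (s n) (s m) <= 2 * eps n + 2 * eps m.
  set mid := 2^-1 *: s m + 2^-1 *: s n.
  have h1 := hmin n mid (Smid _ _ (Ss m) (Ss n)).
  have h2 := hmin m mid (Smid _ _ (Ss m) (Ss n)).
  have em : x - mid = 2^-1 *: ((x - s m) + (x - s n)).
    rewrite {1}[x](_ : x = 2^-1 *: x + 2^-1 *: x); last by rewrite -scalerDl half_half scale1r.
    by rewrite /mid !scalerDr !scalerN opprD addrACA.
  have dm : dist2 ip x mid = 2^-1 * 2^-1 * ip ((x - s m) + (x - s n)) ((x - s m) + (x - s n)).
    by rewrite /dist2 em (ipZl Hip) (ipZr Hip) conj_half mulrA.
  have par := parallelogram (x - s m) (x - s n).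
  rewrite sub_sub in par.
  have -> : dist2 ip (s n) (s m) = 2 * dist2 ip x (s m) + 2 * dist2 ip x (s n) - 4 * dist2 ip x mid.
    by rewrite dm /dist2 -par; field.
  apply: (@le_trans _ _ (2 * (dist2 ip x mid + eps m) + 2 * (dist2 ip x mid + eps n) - 4 * dist2 ip x mid)).
    rewrite lerD2r; apply: lerD; rewrite ler_pM2l ?two_gt0 //.
  by rewrite le_eqVlt; apply/orP; left; apply/eqP; ring.
have cs : cauchy ip s.
  move=> e e0.
  have e40 : 0 < e / 4 by rewrite divr_gt0 // ltr0n.
  have [N hN] := archi_C e40.
  exists N => n m hn hm.
  apply: (le_lt_trans (hc n m)).
  have -> : e = 2 * (e / 4) + 2 * (e / 4) by field; rewrite ?pnatr_eq0.
  by apply: ltrD; rewrite ltr_pM2l ?two_gt0 //; apply: hN.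
have [p hp] := Hcomp cs.
have Sp : S p := Scl s p Ss hp.
exists p; split => // t St.
rewrite ipC //.
suff -> : ip (x - p) t = 0 by rewrite conjC0.
have [/(ip_eq0 Hip) -> | qn] := eqVneq (ip t t) 0; first by rewrite (ip0r Hip).
have q0 : 0 < ip t t by rewrite lt_def qn ip_ge0.
apply/eqP; apply: contraT => cn.
set c := ip (x - p) t.
have d0 : 0 < c * c^* by rewrite mul_conjC_gt0.
set k := c * c^* / (4 * ip t t).
have k0 : 0 < k by rewrite divr_gt0 // mulr_gt0 // ltr0n.
have [N1 hN1] := archi_C k0.
have [N2 hN2] := hp k k0.
pose n := maxn N1 N2.
have en : eps n < k by apply: hN1; rewrite leq_maxl.
have dn : dist2 ip (s n) p < k by apply: hN2; rewrite leq_maxr.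
set cn' := ip (x - s n) t.
have hcn : cn' * cn'^* <= eps n * ip t t.
  have St' : S (s n + (cn' / ip t t) *: t) by rewrite addrC; apply: Slin.
  have := hmin n _ St'.
  rewrite /dist2 opprD addrA (ip_proj Hip) // -addrA lerDl.
  by rewrite addrC subr_ge0 ler_pdivrMr.
set dn' := ip (s n - p) t.
have hdn : dn' * dn'^* <= ip t t * dist2 ip (s n) p by apply: cauchy_schwarz.
have ec : c = cn' + dn' by rewrite /c /cn' /dn' -(ipDl Hip) addrA subrK.
have : c * c^* < c * c^*.
  have h1 : c * c^* <= 2 * (cn' * cn'^*) + 2 * (dn' * dn'^*) by rewrite ec; apply: conj_par.
  apply: (le_lt_trans h1).
  have -> : c * c^* = 2 * (k * ip t t) + 2 * (ip t t * k) by rewrite /k; field; rewrite ?qn ?pnatr_eq0.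
  apply: ler_ltD.
    rewrite ler_pM2l ?two_gt0 //; apply: (le_trans hcn).
    by rewrite ler_pM2r // ltW.
  by rewrite ltr_pM2l ?two_gt0 //; apply: (le_lt_trans hdn); rewrite ltr_pM2l.
by rewrite ltxx.
Qed.

End Proj.

Section Prod.
Variables (R : realType) (V : lmodType R[i]) (ip : V -> V -> R[i]).
Hypothesis Hip : inner_product ip.
Hypothesis Hcomp : forall u, cauchy ip u -> exists x, converges ip u x.

Definition ipP (u v : V * V) : R[i] := ip u.1 v.1 + ip u.2 v.2.

Lemma ipP_inner : inner_product ipP.
Proof.
split.
- move=> a x y z; rewrite /ipP /= !(ipDl Hip) !(ipZl Hip); ring.
- by move=> x y; rewrite /ipP rmorphD /= -!(ipC Hip).
- by move=> x; rewrite /ipP addr_ge0 ?(ip_ge0 Hip).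
- move=> [x1 x2]; rewrite /ipP /= => /eqP.
  rewrite paddr_eq0 ?(ip_ge0 Hip) // => /andP[/eqP/(ip_eq0 Hip) -> /eqP/(ip_eq0 Hip) ->].
  by [].
Qed.

Lemma dist2P u v : dist2 ipP u v = dist2 ip u.1 v.1 + dist2 ip u.2 v.2.
Proof. by []. Qed.

Lemma ipP_complete : forall u, cauchy ipP u -> exists x, converges ipP u x.
Proof.
move=> u cu.
have c1 : cauchy ip (fun n => (u n).1).
  move=> e e0; have [N hN] := cu e e0; exists N => n m hn hm.
  apply: le_lt_trans (hN n m hn hm); rewrite dist2P lerDl; exact: ip_ge0.
have c2 : cauchy ip (fun n => (u n).2).
  move=> e e0; have [N hN] := cu e e0; exists N => n m hn hm.
  apply: le_lt_trans (hN n m hn hm); rewrite dist2P lerDr; exact: ip_ge0.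
have [x1 h1] := Hcomp c1; have [x2 h2] := Hcomp c2.
exists (x1, x2) => e e0.
have e2 : 0 < e / 2 by rewrite divr_gt0 // ltr0n.
have [N1 hN1] := h1 _ e2; have [N2 hN2] := h2 _ e2.
exists (maxn N1 N2) => n hn.
rewrite dist2P /= (_ : e = e / 2 + e / 2); last by field.
by apply: ltrD; [apply: hN1 | apply: hN2]; apply: leq_trans hn; rewrite ?leq_maxl ?leq_maxr.
Qed.

End Prod.

Section OpGen.
Variables (R : realType) (V : lmodType R[i]) (ip : V -> V -> R[i]).
Hypothesis Hip : inner_product ip.

Definition lin_op (X : op V) := is_subspace (dom X) /\
  forall a x y, dom X x -> dom X y -> app X (a *: x + y) = a *: app X x + app X y.

Lemma lin_op0 (X : op V) : lin_op X -> dom X 0 /\ app X 0 = 0.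
Proof.
move=> [[D0 _] L]; split=> //.
have := L (-1) 0 0 D0 D0; rewrite scaler0 addr0 scaleN1r => h.
by rewrite addNr in h.
Qed.

Lemma lin_opB (X : op V) x y : lin_op X -> dom X x -> dom X y ->
  dom X (x - y) /\ app X (x - y) = app X x - app X y.
Proof.
move=> [[D0 Dl] L] dx dy; have := Dl (-1) y x dy dx; have := L (-1) y x dy dx.
by rewrite !scaleN1r ![_ + x]addrC ![_ + app X x]addrC.
Qed.

Lemma lin_opD (X : op V) x y : lin_op X -> dom X x -> dom X y ->
  dom X (x + y) /\ app X (x + y) = app X x + app X y.
Proof.
move=> [[D0 Dl] L] dx dy; have := Dl 1 x y dx dy; have := L 1 x y dx dy.
by rewrite !scale1r.
Qed.

Lemma lin_opZ (X : op V) a x : lin_op X -> dom X x ->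
  dom X (a *: x) /\ app X (a *: x) = a *: app X x.
Proof.
move=> hX dx; have [D0 X0] := lin_op0 hX; case: hX => [[_ Dl] L].
have := Dl a x 0 dx D0; have := L a x 0 dx D0.
by rewrite X0 !addr0.
Qed.

Lemma comp_lin (X : op V) Y : lin_op X -> lin_op Y -> lin_op (Defs.comp X Y).
Proof.
move=> hX hY; have [DX0 X0] := lin_op0 hX; have [DY0 Y0] := lin_op0 hY.
case: (hX) => [[_ DXl] LX]; case: (hY) => [[_ DYl] LY].
split; first split.
- by rewrite /Defs.comp /=; split=> //; rewrite Y0.
- move=> a x y [dx dx'] [dy dy']; rewrite /Defs.comp /=; split; first exact: DYl.
  by rewrite LY //; apply: DXl.
- move=> a x y [dx dx'] [dy dy']; rewrite /Defs.comp /= LY // LX //.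
Qed.

Lemma id_lin : lin_op (@id_op R V).
Proof. by split; [split | move=> a x y _ _]. Qed.

Lemma app_pow (X : op V) k x : app (op_pow X k) x = iter k (app X) x.
Proof. by elim: k => //= k ->. Qed.

Lemma dom_pow (X : op V) k x : dom (op_pow X k) x <->
  (forall i, (i < k)%N -> dom X (iter i (app X) x)).
Proof.
elim: k => [|k IH]; first by split.
rewrite /= /Defs.comp /= app_pow; split.
- move=> [/IH h1 h2] i; rewrite ltnS leq_eqVlt => /orP[/eqP -> // | /h1 //].
- move=> h; split; last exact: h.
  by apply/IH => i ik; apply: h; apply: ltnW.
Qed.

Lemma pow_lin (X : op V) k : lin_op X -> lin_op (op_pow X k).
Proof. by move=> hX; elim: k => [|k IH] /=; [exact: id_lin | exact: comp_lin]. Qed.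

Definition perp0 (X : op V) := forall w, (forall x, dom X x -> ip x w = 0) -> w = 0.

Lemma adj_unique (X : op V) y z z' : perp0 X -> adj_rel ip X y z -> adj_rel ip X y z' -> z = z'.
Proof.
move=> p0 h h'; apply/eqP; rewrite -subr_eq0; apply/eqP; apply: p0 => x dx.
by rewrite (ipBr Hip) -h // -h' // subrr.
Qed.

Lemma adj_spec (X : op V) y z : perp0 X -> adj_rel ip X y z ->
  dom (adjoint ip X) y /\ app (adjoint ip X) y = z.
Proof.
move=> p0 h; split; first by exists z.
rewrite /adjoint /=; apply: xget_unique => // z' h'; exact: adj_unique h' h.
Qed.

Lemma adj_app (X : op V) y : dom (adjoint ip X) y -> adj_rel ip X y (app (adjoint ip X) y).
Proof. by move=> h; rewrite /adjoint /=; apply: xgetPex. Qed.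

Lemma adj_rel_lin (X : op V) a y z y' z' : adj_rel ip X y z -> adj_rel ip X y' z' ->
  adj_rel ip X (a *: y + y') (a *: z + z').
Proof. by move=> h h' x dx; rewrite !(ipDr Hip) !(ipZr Hip) h // h'. Qed.

Lemma adj_lin (X : op V) : perp0 X -> lin_op (adjoint ip X).
Proof.
move=> p0; split; first split.
- by exists 0 => x dx; rewrite !(ip0r Hip).
- move=> a y y' dy dy'; exists (a *: app (adjoint ip X) y + app (adjoint ip X) y').
  by apply: adj_rel_lin; apply: adj_app.
- move=> a y y' dy dy'; apply: (adj_spec p0 _).2.
  by apply: adj_rel_lin; apply: adj_app.
Qed.

Lemma dense_perp0 (X : op V) : is_dense ip (dom X) -> perp0 X.
Proof.
move=> dX w hw; apply: (ip_eq0 Hip); apply/eqP; apply: contraT => nz.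
have w0 : 0 < ip w w by rewrite lt_def nz (ip_ge0 Hip).
have [x dx hx] := dX w _ w0.
have : ip w w <= dist2 ip w x.
  rewrite /dist2 (ipBl Hip) !(ipBr Hip) (hw x dx) [ip w x](ipC Hip) (hw x dx) conjC0.
  rewrite !subr0 sub0r opprK lerDl; exact: ip_ge0.
by move=> h; have := lt_le_trans hx h; rewrite ltxx.
Qed.

Lemma orth_self S x : S x -> orth ip S x -> x = 0.
Proof. by move=> Sx h; apply: (ip_eq0 Hip); apply: h. Qed.

End OpGen.

Section Main.
Variables (R : realType) (V : lmodType R[i]) (ip : V -> V -> R[i]) (T : op V).
Hypothesis Hip : inner_product ip.
Hypothesis Hcomp : forall u, cauchy ip u -> exists x, converges ip u x.
Hypothesis HT : densely_defined_closed ip T.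
Hypothesis HQ : quasinormal ip T.
Hypothesis HEP : EP ip T.

Local Notation t := (app T).
Local Notation D := (dom T).
Local Notation Ts := (adjoint ip T).
Local Notation ts := (app Ts).
Local Notation Ds := (dom Ts).
Local Notation M := (Defs.range T).
Local Notation N := (null_space T).

Lemma T_lin : lin_op T.
Proof. by case: HT. Qed.

Lemma T_perp0 : perp0 ip T.
Proof. by case: HT => _ _ dd _; apply: dense_perp0. Qed.

Lemma Ts_lin : lin_op Ts.
Proof. exact (adj_lin Hip T_perp0). Qed.

Lemma Ts_spec y z : adj_rel ip T y z -> Ds y /\ ts y = z.
Proof. exact (adj_spec Hip T_perp0). Qed.

Lemma Ts_app y : Ds y -> adj_rel ip T y (ts y).
Proof. exact: adj_app. Qed.

Lemma t0 : D 0 /\ t 0 = 0.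
Proof. exact: lin_op0 T_lin. Qed.

Lemma M_closed : is_closed ip M.
Proof. by case: HEP. Qed.

Lemma M_eq : M = Defs.range Ts.
Proof. by case: HEP. Qed.

Lemma M_sub : is_subspace M.
Proof.
split; first by exists 0; rewrite ?(t0).2; case: t0.
move=> a _ _ [x dx <-] [y dy <-]; exists (a *: x + y).
  by case: T_lin => [[_ L] _]; apply: L.
by case: T_lin => _ L; apply: L.
Qed.

Lemma N_sub : is_subspace N.
Proof.
split; first by case: t0.
move=> a x y [dx tx] [dy ty]; case: T_lin => [[_ L] L'].
by split; [apply: L | rewrite L' // tx ty scaler0 addr0].
Qed.

Lemma N_closed : is_closed ip N.
Proof.
move=> u x hu cu; case: HT => _ _ _ cl.
have h : converges ip (fun n => t (u n)) 0.
  by move=> e e0; exists 0%N => n _; rewrite (hu n).2 /dist2 subr0 (ip0l Hip).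
by have [] := cl u x 0 (fun n => (hu n).1) cu h.
Qed.

Definition P y := xget 0 [set r | M r /\ orth ip M (y - r)].

Lemma orthB S a b : orth ip S a -> orth ip S b -> orth ip S (a - b).
Proof. by move=> ha hb x Sx; rewrite (ipBr Hip) ha // hb // subrr. Qed.

Lemma P_unique y r : M r -> orth ip M (y - r) -> P y = r.
Proof.
move=> Mr hr; apply: xget_unique => // r' [Mr' hr'].
have h1 : M (r' - r).
  by case: M_sub => _ L; rewrite addrC -scaleN1r; apply: L.
have h2 : orth ip M (r' - r).
  by have := orthB hr hr'; rewrite sub_sub.
by apply/eqP; rewrite -subr_eq0; apply/eqP; exact (orth_self Hip h1 h2).
Qed.

Lemma P_spec y : M (P y) /\ orth ip M (y - P y).
Proof.
have [r [Mr hr]] := proj_exists Hip Hcomp M_sub M_closed y.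
by rewrite (P_unique Mr hr).
Qed.

Lemma P_M m : M m -> P m = m.
Proof. by move=> Mm; apply: P_unique => // x _; rewrite subrr (ip0r Hip). Qed.

Lemma M_orthN m n : M m -> N n -> ip n m = 0.
Proof.
rewrite M_eq => -[y dy <-] [dn tn].
by rewrite -(Ts_app dy dn) tn (ip0l Hip).
Qed.

Lemma NM0 x : M x -> N x -> x = 0.
Proof. by move=> Mx Nx; apply: (ip_eq0 Hip); apply: M_orthN. Qed.


Definition graph : set (V * V) := [set u | D u.1 /\ u.2 = t u.1].

Lemma graph_sub : is_subspace graph.
Proof.
split; first by case: t0 => d0 e0; rewrite /graph /= e0.
move=> a u v [du eu] [dv ev]; rewrite /graph /=; case: T_lin => [[_ L] L'].
by split; [apply: L | rewrite L' // eu ev].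
Qed.

Lemma graph_closed : is_closed (ipP ip) graph.
Proof.
move=> u z hu cu; case: HT => _ _ _ cl.
have c1 : converges ip (fun n => (u n).1) z.1.
  move=> e e0; have [N0 hN] := cu e e0; exists N0 => n hn.
  apply: le_lt_trans (hN n hn); rewrite dist2P lerDl; exact: ip_ge0.
have c2 : converges ip (fun n => t (u n).1) z.2.
  move=> e e0; have [N0 hN] := cu e e0; exists N0 => n hn.
  apply: le_lt_trans (hN n hn); rewrite dist2P -(hu n).2 lerDr; exact: ip_ge0.
have [] := cl _ _ _ (fun n => (hu n).1) c1 c2.
by move=> h1 h2; split.
Qed.

Lemma orthM_N s : orth ip M s -> N s.
Proof.
move=> hs.
have [[x y] [[dp ep] hp]] := proj_exists (ipP_inner Hip) (ipP_complete Hip Hcomp)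
   graph_sub graph_closed (s, 0).
simpl in dp, ep.
have adj : adj_rel ip T (t x) (s - x).
  move=> x' dx'.
  have := hp (x', t x') (conj dx' erefl).
  rewrite /ipP /= ep sub0r (ipNr Hip) => /eqP; rewrite subr_eq0 => /eqP ->.
  done.
have [dsx tsx] := Ts_spec adj.
set q := s - x.
have Mq : M q by rewrite M_eq; exists (t x).
have h0 : ip q s = 0 by apply: hs.
have es : s = q + x by rewrite /q subrK.
have hqx : ip q x = ip (t x) (t x).
  by rewrite (ipC Hip) /q -(adj x dp) (ip_conj Hip).
rewrite es (ipDr Hip) hqx in h0.
move/eqP: h0; rewrite paddr_eq0 ?(ip_ge0 Hip) // => /andP[/eqP/(ip_eq0 Hip) q0 /eqP/(ip_eq0 Hip) tx0].
by rewrite es q0 add0r; split.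
Qed.

Lemma orthN_M v : orth ip N v -> M v.
Proof.
move=> hv; have [MP oP] := P_spec v.
set s := v - P v.
have Ns : N s := orthM_N oP.
have h : ip s v = 0 by apply: hv.
have es : v = P v + s by rewrite /s addrC subrK.
have h2 : ip s (P v) = 0 by rewrite (ipC Hip) oP // conjC0.
rewrite es (ipDr Hip) h2 add0r in h.
have s0 := ip_eq0 Hip h.
by rewrite es s0 addr0.
Qed.

Local Notation A := (Defs.comp Ts T).

Lemma A_lin : lin_op A.
Proof. exact: comp_lin Ts_lin T_lin. Qed.

Lemma A_N x : N x -> dom A x /\ app A x = 0.
Proof.
move=> [dx tx]; have [D0 ts0] := lin_op0 Ts_lin.
by rewrite /Defs.comp /= tx.
Qed.

Lemma A_ker x : dom A x -> app A x = 0 -> N x.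
Proof.
move=> [dx dtx] ax; split=> //; apply: (ip_eq0 Hip).
by rewrite (Ts_app dtx dx); move: ax; rewrite /Defs.comp /= => ->; rewrite (ip0r Hip).
Qed.

Lemma NA_eq : null_space A = N.
Proof.
apply/funext => x; apply/propext; split.
- by move=> [h1 h2]; apply: A_ker.
- by move=> /A_N.
Qed.

Lemma rA_eq : Defs.range A = M.
Proof.
apply/funext => m; apply/propext; split.
- move=> [x [dx dtx] <-]; rewrite M_eq; by exists (t x).
- rewrite M_eq => -[y dy <-].
  have [MP oP] := P_spec y.
  set s := y - P y.
  have adj0 : adj_rel ip T s 0.
    move=> x dx; rewrite (ip0r Hip); apply: oP; by exists x.
  have [ds ts0] := Ts_spec adj0.
  have ePy : P y = y - s by rewrite /s opprB addrC subrK.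
  have [dP tP] := lin_opB Ts_lin dy ds.
  rewrite -ePy ts0 subr0 in dP tP.
  case: MP => x dx ex.
  exists x; first by split => //; rewrite ex.
  rewrite /Defs.comp /= ex; exact tP.
Qed.

Lemma rpA y : range_part ip A y = P y.
Proof. by rewrite /range_part rA_eq. Qed.

Local Notation g := (app (mp_inverse ip A)).

Lemma g_unique y x : dom A x -> orth ip N x -> app A x = P y -> g y = x.
Proof.
move=> dx ox ax; rewrite /mp_inverse /=; apply: xget_unique.
  by split; [split => //; rewrite NA_eq | rewrite rpA].
move=> x' [[dx' ox'] ax']; rewrite NA_eq rpA in ox' ax'.
have ax2 : app A x' = P y := ax'.
have [dd ad] := lin_opB A_lin dx' dx.
rewrite ax2 ax subrr in ad.
have Nd := A_ker dd ad.
have od : orth ip N (x' - x) := orthB ox' ox.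
have := orth_self Hip Nd od.
by move/eqP; rewrite subr_eq0 => /eqP.
Qed.

Lemma g_spec y : [/\ dom A (g y), orth ip N (g y) & app A (g y) = P y].
Proof.
have : Defs.range A (P y) by rewrite rA_eq; case: (P_spec y).
case=> x0 dx0 ax0.
have [n0 [Nn0 on0]] := proj_exists Hip Hcomp N_sub N_closed x0.
have [dn an] := A_N Nn0.
have [dd ad] := lin_opB A_lin dx0 dn.
rewrite an subr0 ax0 in ad.
by rewrite (g_unique dd on0 ad).
Qed.

Lemma g_D y : D (g y).
Proof. by case: (g_spec y) => -[]. Qed.

Lemma g_M y : M (g y).
Proof. by apply: orthN_M; case: (g_spec y). Qed.

Lemma g_P y : g (P y) = g y.
Proof.
case: (g_spec y) => d o a; apply (g_unique d o).
by rewrite a (P_M (P_spec y).1).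
Qed.

Lemma mpA_dom y : dom (mp_inverse ip A) y.
Proof.
exists (P y), (y - P y); rewrite rA_eq; case: (P_spec y) => h1 h2; split=> //.
by rewrite addrC subrK.
Qed.


Definition Wf z := t (g z).

Lemma base z : g (t (g z)) = t (g (g z)).
Proof.
set v := g (g z).
have [dv ov av] := g_spec (g z).
have av' : app A v = g z by rewrite av P_M //; exact: g_M.
have dTA : dom (Defs.comp T A) v by split => //; rewrite av'; exact: g_D.
case: HQ => hd ha.
have dAT : dom (Defs.comp A T) v by rewrite -hd.
have e := ha v dTA.
case: dAT => dv' dAtv.
apply (g_unique dAtv).
  by move=> n0 Nn0; apply: M_orthN => //; exists v.
have e' : t (app A v) = app A (t v) := e.
rewrite -e' av' P_M //; exists (g z) => //; exact: g_D.
Qed.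

Lemma TsWf z : Ds (Wf z) /\ ts (Wf z) = P z.
Proof. by case: (g_spec z) => -[_ h] _ a; split. Qed.

Lemma Wg k z : iter k Wf (g z) = g (iter k Wf z).
Proof. by elim: k z => // k IH z; rewrite !iterS IH; symmetry; apply: base. Qed.

Lemma Htg k u : iter k t (iter k g u) = iter k Wf u.
Proof. by elim: k u => // k IH u; rewrite [iter k.+1 g u]iterSr iterS IH Wg iterS. Qed.

Lemma iter_M k y : M (iter k.+1 Wf y).
Proof. by exists (g (iter k Wf y)) => //; exact: g_D. Qed.

Lemma xn_dom n y : dom (op_pow T n) (iter n g y).
Proof.
apply/dom_pow => i lt.
rewrite -(subnKC (ltnW lt)) iterD -(subnSK lt) iterS Htg Wg; exact: g_D.
Qed.

Lemma N_pow x : N x -> forall i, N (iter i t x).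
Proof.
move=> Nx; elim=> // i [di ti] /=; rewrite ti; case: t0 => d0 e0; by split.
Qed.

Lemma N_domS n x : N x -> dom (op_pow T n) x.
Proof. by move=> Nx; apply/dom_pow => i _; case: (N_pow Nx i). Qed.

Lemma N_appS k x : N x -> app (op_pow T k.+1) x = 0.
Proof. by move=> Nx; rewrite app_pow /=; case: (N_pow Nx k). Qed.

Lemma gsym a b : ip (g a) b = ip a (g b).
Proof.
suff h : forall a b, ip (g a) b = ip (t (g a)) (t (g b)).
  by rewrite h [ip a (g b)](ipC Hip) h -(ipC Hip).
move=> a' b'.
have e1 : ip (g a') b' = ip (g a') (P b') + ip (g a') (b' - P b').
  by rewrite -(ipDr Hip) addrC subrK.
rewrite e1 ((P_spec b').2 _ (g_M a')) addr0.
case: (g_spec b') => -[_ db] _ ab.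
have adj := Ts_app db (g_D a').
rewrite -ab; exact: esym adj.
Qed.

Lemma gsymk k a b : ip (iter k g a) b = ip a (iter k g b).
Proof. by elim: k a b => // k IH a b; rewrite iterS gsym IH -iterSr. Qed.

Lemma ginj k v : M v -> iter k g v = 0 -> v = 0.
Proof.
elim: k v => // k IH v Mv; rewrite iterSr => /(IH _ (g_M v)) gv.
case: (g_spec v) => _ _; rewrite gv (lin_op0 A_lin).2 (P_M Mv) => <-.
done.
Qed.

Lemma S_perp0 n : perp0 ip (op_pow T n).
Proof.
move=> w hw.
have oN : orth ip N w by move=> x Nx; apply: hw; apply: N_domS.
have Mw := orthN_M oN.
have h2 := hw _ (xn_dom n (iter n g w)).
rewrite gsymk in h2.
exact: ginj Mw (ip_eq0 Hip h2).
Qed.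

Lemma adj_pow j x u : dom (op_pow T j) x -> dom (op_pow Ts j) u ->
  ip (iter j t x) u = ip x (iter j ts u).
Proof.
elim: j x u => [|j IH] x u dx du; first done.
have dx1 : D x by have := (dom_pow T j.+1 x).1 dx 0%N (ltn0Sn _).
have dx2 : dom (op_pow T j) (t x).
  apply/dom_pow => i lt; rewrite -iterSr.
  by apply ((dom_pow T j.+1 x).1 dx); rewrite ltnS.
case: du => du1; rewrite app_pow => du2.
by rewrite iterSr IH // (Ts_app du2 dx1) iterS.
Qed.

Lemma NS_N k x : dom (op_pow T k.+1) x -> iter k.+1 t x = 0 -> N x.
Proof.
elim: k x => [|k IH] x dx; first by move=> h; split => //; case: dx => _ .
move=> h; apply: IH; first by case: dx.
have Dk : D (iter k.+1 t x) by apply ((dom_pow T k.+2 x).1 dx).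
apply: NM0; last by split.
by exists (iter k t x) => //; apply ((dom_pow T k.+2 x).1 dx); rewrite ltnS ltnW.
Qed.


Lemma TsWf_iter y' m : M y' -> Ds (iter m.+1 Wf y') /\ ts (iter m.+1 Wf y') = iter m Wf y'.
Proof.
move=> My; rewrite iterS; have [h1 h2] := TsWf (iter m Wf y'); split => //.
rewrite h2 P_M //; case: m {h1 h2} => [|m] //; exact: iter_M.
Qed.

Lemma Ts_iter y' i m : M y' -> iter i ts (iter (i + m) Wf y') = iter m Wf y'.
Proof.
move=> My; elim: i m => // i IH m.
by rewrite iterS addSnnS IH (TsWf_iter m My).2.
Qed.

Lemma Ts_dom y' n : M y' -> dom (op_pow Ts n) (iter n Wf y').
Proof.
move=> My; apply/dom_pow => i lt.
rewrite -(subnKC (ltnW lt)) Ts_iter // -(subnSK lt).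
exact: (TsWf_iter _ My).1.
Qed.

Lemma main_succ k : op_eq (cauchy_dual ip (op_pow T k.+1)) (op_pow (cauchy_dual ip T) k.+1).
Proof.
set S := op_pow T k.+1.
set B := Defs.comp (adjoint ip S) S.
have S_lin : lin_op S := pow_lin k.+1 T_lin.
have key : forall y, [/\ dom B (iter k.+1 g y), app B (iter k.+1 g y) = P y,
    orth ip (null_space B) (iter k.+1 g y) & app S (iter k.+1 g y) = iter k.+1 Wf y].
  move=> y.
  have My' : M (P y) := (P_spec y).1.
  have hW : iter k.+1 Wf y = iter k.+1 Wf (P y).
    by rewrite !iterSr /Wf g_P.
  have appS : app S (iter k.+1 g y) = iter k.+1 Wf y by rewrite /S app_pow Htg.
  have adjS : adj_rel ip S (iter k.+1 Wf (P y)) (P y).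
    move=> x dx; rewrite /S app_pow adj_pow //; last exact: Ts_dom.
    by rewrite -[in iter k.+1 Wf (P y)](addn0 k.+1) Ts_iter.
  have [dSu eSu] := adj_spec Hip (@S_perp0 k.+1) adjS.
  split => //.
  - by split; [exact: xn_dom | rewrite appS hW].
  - by change (app (adjoint ip S) (app S (iter k.+1 g y)) = P y); rewrite appS hW eSu.
  - move=> z [dz az].
    have [dz1 dz2] := dz.
    have h := adj_app dz2 dz1.
    have az' : app (adjoint ip S) (app S z) = 0 := az.
    rewrite az' (ip0r Hip) in h.
    have Sz := ip_eq0 Hip h.
    have Nz : N z by apply: (NS_N dz1); rewrite -app_pow.
    by rewrite iterS; case: (g_spec (iter k g y)) => _ o _; apply: o.
have rB : Defs.range B = M.
  apply/funext => m; apply/propext; split.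
  - move=> [z [dz1 dz2] <-]; apply: orthN_M => n0 Nn0.
    have h := adj_app dz2 (N_domS k.+1 Nn0).
    by rewrite N_appS // (ip0l Hip) in h.
  - move=> Mm; have [h1 h2 _ _] := key m; rewrite -(P_M Mm); by exists (iter k.+1 g m).
have rpB y : range_part ip B y = P y by rewrite /range_part rB.
have xs_spec : forall y, coimage ip B (app (mp_inverse ip B) y) /\
    app B (app (mp_inverse ip B) y) = range_part ip B y.
  move=> y.
  have ex : exists x, coimage ip B x /\ app B x = range_part ip B y.
    have [h1 h2 h3 _] := key y; exists (iter k.+1 g y); split; first by split.
    by rewrite rpB.
  exact (xgetPex 0 ex).
have xs_val : forall y, app S (app (mp_inverse ip B) y) = iter k.+1 Wf y.
  move=> y; have [[dxs _] axs] := xs_spec y.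
  have [dxn axn _ sxn] := key y.
  rewrite -sxn; apply/eqP; rewrite -subr_eq0; apply/eqP.
  set xs := app (mp_inverse ip B) y in dxs axs *.
  have [dv av] := lin_opB S_lin dxs.1 dxn.1.
  rewrite -av; apply: (ip_eq0 Hip).
  rewrite {2}av (ipBr Hip).
  rewrite (adj_app dxs.2 dv) (adj_app dxn.2 dv).
  have e1 : app (adjoint ip S) (app S xs) = P y by rewrite -rpB; exact: axs.
  have e2 : app (adjoint ip S) (app S (iter k.+1 g y)) = P y := axn.
  by rewrite e1 e2 subrr.
split.
- apply/funext => y; apply/propext; split => _; last first.
    split; first by exists (P y), (y - P y); rewrite rB; case: (P_spec y) => ? ?; split => //; rewrite addrC subrK.
    by have [[[? _] _] _] := xs_spec y.
  apply/dom_pow => i _; split; first exact: mpA_dom.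
  exact: g_D.
- move=> y _; rewrite [in RHS]app_pow.
  exact: xs_val.
Qed.

End Main.

Section Zero.
Variables (R : realType) (V : lmodType R[i]) (ip : V -> V -> R[i]).
Hypothesis Hip : inner_product ip.

Lemma main_zero (T : op V) :
  op_eq (cauchy_dual ip (op_pow T 0)) (op_pow (cauchy_dual ip T) 0).
Proof.
set Id := @id_op R V.
have p0 : perp0 ip Id by move=> w hw; apply: (ip_eq0 Hip); apply: hw.
have Is y : dom (adjoint ip Id) y /\ app (adjoint ip Id) y = y.
  by apply: (adj_spec Hip p0) => x _.
set B0 := Defs.comp (adjoint ip Id) Id.
have aB y : app B0 y = y := (Is y).2.
have dB y : dom B0 y := conj Logic.I (Is y).1.
have rB y : Defs.range B0 y by exists y => //; exact: aB.
have rp y : range_part ip B0 y = y.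
  apply: xget_unique; first by split => // x _; rewrite subrr (ip0r Hip).
  move=> r [_ h]; apply/eqP; rewrite eq_sym -subr_eq0; apply/eqP.
  by apply: (ip_eq0 Hip); apply: h.
have mp y : app (mp_inverse ip B0) y = y.
  apply: xget_unique.
    split; last by rewrite aB rp.
    split => // x [_ ax]; rewrite aB in ax; by rewrite ax (ip0l Hip).
  move=> x [_ ax]; by rewrite aB rp in ax.
have mpd y : dom (mp_inverse ip B0) y.
  by exists y, 0; split => //; [move=> x _; rewrite (ip0r Hip) | rewrite addr0].
split.
- by apply/funext => y; apply/propext; split.
- move=> y _; exact (mp y).
Qed.

End Zero.

Theorem theorem2p18 (R : realType) (V : lmodType R[i]) (ip : V -> V -> R[i])
  (T : op V) :
  hilbert_space ip ->
  densely_defined_closed ip T ->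
  quasinormal ip T ->
  EP ip T ->
  forall n : nat,
    op_eq (cauchy_dual ip (op_pow T n)) (op_pow (cauchy_dual ip T) n).
Proof.
move=> [Hip Hcomp] HT HQ HEP [|k].
- exact: main_zero.
- exact: main_succ.
Qed.
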